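(* Let $\mathcal{A}=\{\mathcal{U}_n\}_{n\in\mathbb{N}}$ be a defining sequence of a space $X$. Then $\mathcal{A}$ equipped with the ultrametric $u_{\mathcal{A}}$ is tame. Furthermore, $\mathcal{A}$ equipped with an admissible metric $d$ is tame if and only if $d$ is uniformly equivalent to $u_{\mathcal{A}}$.
   Context: Spaces are nonempty separable metrizable. A partition is a cover by pairwise disjoint nonempty clopen sets; $\mathcal{U}[x]$ is the element of $\mathcal{U}$ containing $x$. A defining sequence is a sequence $\{\mathcal{U}_n\}$ of partitions, each refining the previous, whose union is a basis of the topology. $u_{\mathcal{A}}(x,y)=1/(1+j)$ with $j=\inf\{n:\mathcal{U}_n[x]\ne\mathcal{U}_n[y]\}$ ($u_{\mathcal{A}}(x,x)=0$). $\mathcal{A}$ with a metric $d$ is tame if $S_n=\sup\{\operatorname{diam}_d(O):O\in\mathcal{U}_n\}\to0$ and for each $n$ there is $\rho_n>0$ with $d(x_1,x_2)\ge\rho_n$ whenever $x_1,x_2$ are in distinct elements of $\mathcal{U}_n$. Metrics $d_1,d_2$ are uniformly equivalent if the identity maps $(X,d_1)\to(X,d_2)$ and $(X,d_2)\to(X,d_1)$ are uniformly continuous. *)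

(* Defs.v *)
From HB Require Import structures.
From mathcomp Require Import all_boot all_order all_algebra.
From mathcomp Require Import all_classical all_reals topology.
Set Implicit Arguments. Unset Strict Implicit. Unset Printing Implicit Defensive.
Import Order.TTheory GRing.Theory Num.Theory.
Local Open Scope classical_set_scope.
Local Open Scope ring_scope.

Section Defs.
Variables (R : realType) (X : topologicalType).

Definition is_metric (d : X -> X -> R) : Prop :=
  (forall x y, 0 <= d x y) /\ (forall x y, d x y = 0 <-> x = y) /\
  (forall x y, d x y = d y x) /\ (forall x y z, d x z <= d x y + d y z).

Definition admissible (d : X -> X -> R) : Prop :=
  is_metric d /\
  forall A : set X, open A <->
    (forall x, A x -> exists2 e : R, 0 < e & forall y, d x y < e -> A y).

Definition nonempty_separable_metrizable : Prop :=
  (exists x : X, True) /\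
  (exists D : set X, countable D /\ dense D) /\
  (exists d : X -> X -> R, admissible d).

Definition is_partition (P : set (set X)) : Prop :=
  (forall O, P O -> O !=set0 /\ open O /\ closed O) /\
  (forall O1 O2, P O1 -> P O2 -> O1 <> O2 -> O1 `&` O2 = set0) /\
  (forall x, exists O, P O /\ O x).

Definition cell (P : set (set X)) (x : X) : set X :=
  xget setT [set O | P O /\ O x].

Definition defining_sequence (U : nat -> set (set X)) : Prop :=
  (forall n, is_partition (U n)) /\
  (forall n O, U n.+1 O -> exists2 O', U n O' & O `<=` O') /\
  (forall A : set X, open A -> forall x, A x ->
     exists n, exists2 O, U n O & O x /\ O `<=` A).

(* u_A(x,y) = 1/(1+j), j = inf{n | U_n[x] <> U_n[y]} (and 0 if no such n,
   in particular u_A(x,x) = 0) *)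
Definition uA (U : nat -> set (set X)) (x y : X) : R :=
  match pselect (exists n, asbool (cell (U n) x <> cell (U n) y)) with
  | left h => 1 / (1 + (ex_minn h)%:R)
  | right _ => 0
  end.

(* tameness of (U, d): S_n = sup_{O in U_n} diam_d O tends to 0, and
   for each n a positive separation rho_n between distinct cells. *)
Definition tame (U : nat -> set (set X)) (d : X -> X -> R) : Prop :=
  (forall e : R, 0 < e -> exists N, forall n, (N <= n)%N ->
     forall O, U n O -> forall x y, O x -> O y -> d x y <= e) /\
  (forall n, exists2 rho : R, 0 < rho &
     forall O1 O2, U n O1 -> U n O2 -> O1 <> O2 ->
     forall x1 x2, O1 x1 -> O2 x2 -> rho <= d x1 x2).

Definition unif_cont_id (d1 d2 : X -> X -> R) : Prop :=
  forall e : R, 0 < e -> exists2 delta : R, 0 < delta &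
    forall x y, d1 x y < delta -> d2 x y < e.

Definition unif_equiv (d1 d2 : X -> X -> R) : Prop :=
  unif_cont_id d1 d2 /\ unif_cont_id d2 d1.

End Defs.

(* Main.v *)
Require Import Defs.
From HB Require Import structures.
From mathcomp Require Import all_boot all_order all_algebra.
From mathcomp Require Import all_classical all_reals topology.
Import Order.TTheory GRing.Theory Num.Theory.
Local Open Scope classical_set_scope.
Local Open Scope ring_scope.

Section Aux.
Variables (R : realType) (X : topologicalType).

Lemma cell_eq (P : set (set X)) (x : X) O :
  is_partition P -> P O -> O x -> cell P x = O.
Proof.
move=> [_ [disj _]] PO Ox; rewrite /cell; apply: xget_unique => //.
move=> O' [PO' O'x]; apply: contrapT => neq.
have := disj _ _ PO' PO neq; rewrite -subset0 => /(_ x); apply; by split.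
Qed.

Lemma cellP (P : set (set X)) (x : X) :
  is_partition P -> P (cell P x) /\ cell P x x.
Proof.
move=> [_ [_ cov]]; have [O [PO Ox]] := cov x.
rewrite /cell; apply: (@xgetPex _ setT [set O | P O /\ O x]); by exists O.
Qed.

Lemma same_down (U : nat -> set (set X)) x y k n :
  defining_sequence U -> cell (U (k + n)%N) x = cell (U (k + n)%N) y ->
  cell (U n) x = cell (U n) y.
Proof.
move=> [part [refi _]]; elim: k => [//|k IH] E; apply: IH.
rewrite addSn in E.
have [Px xx] := cellP _ x (part (k + n).+1).
have [Py yy] := cellP _ y (part (k + n).+1).
have [O' UO' sub] := refi _ _ Px.
rewrite (cell_eq _ x _ (part _) UO' (sub _ xx)).
rewrite E in sub.
by rewrite (cell_eq _ y _ (part _) UO' (sub _ yy)).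
Qed.

Lemma same_down' (U : nat -> set (set X)) x y m n :
  defining_sequence U -> (m <= n)%N -> cell (U n) x = cell (U n) y ->
  cell (U m) x = cell (U m) y.
Proof.
move=> D mn E; have := same_down _ x y (n - m)%N m D; rewrite subnK //; exact.
Qed.

Definition rinv (n : nat) : R := 1 / (1 + n%:R).

Lemma rinv_gt0 n : 0 < rinv n.
Proof. by rewrite /rinv nat1r divr_gt0 // ltr0Sn. Qed.

Lemma rinv_mono m n : (m <= n)%N -> rinv n <= rinv m.
Proof.
move=> mn; rewrite /rinv !nat1r !div1r lef_pV2 ?posrE ?ltr0Sn //.
by rewrite ler_nat.
Qed.

Lemma rinv_small (e : R) : 0 < e -> exists N, rinv N < e.
Proof.
move=> e0; exists (Num.truncn (e^-1)).
rewrite /rinv nat1r div1r -[e]invrK ltf_pV2 ?posrE ?invr_gt0 ?ltr0Sn //.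
by rewrite invrK truncnS_gt.
Qed.

Lemma uA_le (U : nat -> set (set X)) x y n :
  defining_sequence U -> cell (U n) x = cell (U n) y -> uA R U x y <= rinv n.+1.
Proof.
move=> D E; rewrite /uA; case: pselect => [h|_]; last exact/ltW/rinv_gt0.
case: ex_minnP => j /asboolP jne _; apply: rinv_mono.
rewrite ltnNge; apply/negP => jn; apply: jne.
exact: same_down' D jn E.
Qed.

Lemma uA_ge (U : nat -> set (set X)) x y n :
  cell (U n) x <> cell (U n) y -> rinv n <= uA R U x y.
Proof.
move=> E; rewrite /uA; case: pselect => [h|nh]; last first.
  by exfalso; apply: nh; exists n; apply/asboolP.
case: ex_minnP => j _ jmin; apply: rinv_mono; apply: jmin.
exact/asboolP.
Qed.

Lemma diff_cell (U : nat -> set (set X)) n O1 O2 x1 x2 :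
  defining_sequence U -> U n O1 -> U n O2 -> O1 <> O2 -> O1 x1 -> O2 x2 ->
  cell (U n) x1 <> cell (U n) x2.
Proof.
move=> [part _] U1 U2 ne h1 h2.
by rewrite (cell_eq _ x1 _ (part n) U1 h1) (cell_eq _ x2 _ (part n) U2 h2).
Qed.

Lemma same_cell (U : nat -> set (set X)) n O x y :
  defining_sequence U -> U n O -> O x -> O y -> cell (U n) x = cell (U n) y.
Proof.
move=> [part _] UO Ox Oy.
by rewrite (cell_eq _ x _ (part n) UO Ox) (cell_eq _ y _ (part n) UO Oy).
Qed.

End Aux.
Arguments cellP {X P x}.
Arguments rinv_small {R e}.
Arguments uA_le {R X U x y n}.
Arguments uA_ge {R X U x y n}.
Arguments same_cell {X U n O x y}.
Arguments diff_cell {X U n O1 O2 x1 x2}.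
Arguments rinv_mono {R m n}.

Theorem proposition3p9 (R : realType) (X : topologicalType)
    (U : nat -> set (set X)) :
  nonempty_separable_metrizable R X ->
  defining_sequence U ->
  tame U (@uA R X U) /\
  (forall d : X -> X -> R, admissible d ->
     (tame U d <-> unif_equiv d (@uA R X U))).
Proof.
move=> _ D; split.
  split.
    move=> e e0; have [N hN] := rinv_small e0; exists N => n Nn O UO x y Ox Oy.
    apply: (le_trans (uA_le D (same_cell D UO Ox Oy))).
    apply: le_trans (ltW hN); apply: rinv_mono; exact: leqW.
  move=> n; exists (rinv R n); first exact: rinv_gt0.
  move=> O1 O2 U1 U2 ne x1 x2 h1 h2; apply: uA_ge.
  exact: diff_cell D U1 U2 ne h1 h2.
move=> d _; split.
  move=> [diam sep]; split.
    move=> e e0; have [n hn] := rinv_small e0.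
    have [rho rho0 hrho] := sep n; exists rho => // x y dxy.
    have E : cell (U n) x = cell (U n) y.
      apply: contrapT => ne.
      have [part _] := D.
      have [Px xx] := cellP (x:=x) (part n); have [Py yy] := cellP (x:=y) (part n).
      have := hrho _ _ Px Py ne _ _ xx yy.
      by rewrite leNgt dxy.
    apply: le_lt_trans (uA_le D E) _; apply: le_lt_trans hn.
    exact: rinv_mono.
  move=> e e0; have [N hN] := diam (e / 2) (divr_gt0 e0 (ltr0Sn R 1)).
  exists (rinv R N); first exact: rinv_gt0.
  move=> x y uxy.
  have E : cell (U N) x = cell (U N) y.
    apply: contrapT => ne; have := uA_ge (R:=R) ne; by rewrite leNgt uxy.
  have [part _] := D.
  have [Px xx] := cellP (x:=x) (part N).
  have yy : cell (U N) x y by rewrite E; have [] := cellP (x:=y) (part N).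
  apply: le_lt_trans (hN N (leqnn N) _ Px _ _ xx yy) _.
  by rewrite ltr_pdivrMr // ltr_pMr // ltr1n.
move=> [ud du]; split.
  move=> e e0; have [delta d0 hd] := du e e0.
  have [N hN] := rinv_small d0; exists N => n Nn O UO x y Ox Oy.
  apply/ltW/hd; apply: le_lt_trans (uA_le D (same_cell D UO Ox Oy)) _.
  apply: le_lt_trans hN; apply: rinv_mono; exact: leqW.
move=> n; have [delta d0 hd] := ud (rinv R n) (rinv_gt0 R n).
exists delta => // O1 O2 U1 U2 ne x1 x2 h1 h2.
rewrite leNgt; apply/negP => /hd.
by rewrite ltNge (uA_ge (diff_cell D U1 U2 ne h1 h2)).
Qed.
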